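(* Let $m\ge1$ and let $\pi$ be the right action of $G_{m,m}$ on $H_{2m+1}=\{0,1\}^{2m+1}$ described below. Then: (1) for every $k=0,\dots,m$, the subgroup $G_{m,k}=\langle a_1,\dots,a_{m+k+1}\rangle$ acts transitively on $H_{m+k+1}$; (2) each generator $a_i$, $i=1,\dots,2m+1$, acts as an involution on $H_{2m+1}$; (3) for every $v\in H_{2m+1}$ and every $i=1,\dots,2m+1$, $\pi(a_i)v$ differs from $v$ in exactly one coordinate (in particular $\pi(a_i)$ has no fixed points); (4) for any $i\ne j$, $\pi(a_ia_j)$ has no fixed points.
   Context: $G_{m,k}=\langle a_1,\dots,a_{m+k+1}\mid [a_i,a_{i+1}]=1\ (1\le i\le m),\ a_{m+j+1}^{-1}a_ja_{m+j+1}=a_{m+j}\ (1\le j\le k)\rangle$, and $G_{m,0}\subset G_{m,1}\subset\dots\subset G_{m,m}$ via the obvious inclusions on generators. Let $H_n=\{0,1\}^n$, identified with a subset of $H_{n+1}$ by appending a last coordinate $0$, and let $H_n^*\subset H_{n+1}$ be the tuples with last coordinate $1$, so $H_{n+1}=H_n\sqcup H_n^*$. Let $\beta_i$ be the map flipping the $i$-th coordinate (fixing others), and $\varphi_{k,m+k}$ the map swapping the $k$-th and $(m+k)$-th coordinates. A right action is given by a map $\pi$ with $\pi(gh)=\pi(h)\pi(g)$ (composition of permutations). Define $\pi$ inductively: on $H_{m+1}$, $\pi(a_i)=\beta_i$ for $i=1,\dots,m+1$. For $k=1,\dots,m$, having $\pi(a_1),\dots,\pi(a_{m+k})$ on $H_{m+k}$,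 set $\pi(a_{m+k+1})=\beta_{m+k+1}$ on $H_{m+k+1}$, and for $1\le j\le m+k$ set $\pi(a_j)|_{H_{m+k}^*}=\beta_{m+k+1}\circ\varphi_{k,m+k}\circ\pi(a_j)|_{H_{m+k}}\circ\varphi_{k,m+k}\circ\beta_{m+k+1}$. These rules give a well-defined right action of $G_{m,m}$ on $H_{2m+1}$, restricting to an action of $G_{m,k}$ on $H_{m+k+1}$. *)

(* Defs.v *)
From mathcomp Require Import all_boot.
Set Implicit Arguments. Unset Strict Implicit. Unset Printing Implicit Defensive.

(* Points of H_n = {0,1}^n are represented as bit sequences of size n
   (false = 0, true = 1); coordinate i (1-based, 1 <= i <= n) of v is
   nth false v i.-1.  H_n is identified with the elements of H_{n+1}
   whose last coordinate is 0 (append false), H_n^* = last coordinate 1. *)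

Definition flip (i : nat) (v : seq bool) : seq bool :=
  mkseq (fun t => if t == i.-1 then ~~ nth false v t else nth false v t) (size v).

Definition swapc (i j : nat) (v : seq bool) : seq bool :=
  mkseq (fun t => nth false v (if t == i.-1 then j.-1
                               else if t == j.-1 then i.-1 else t)) (size v).

(* pi_act m k j v : the permutation pi(a_j) of H_{m+k+1} (1 <= j <= m+k+1),
   defined by the inductive rule of the paper:
   - on H_{m+1}: pi(a_i) = beta_i;
   - on H_{m+k+1} (k >= 1): pi(a_{m+k+1}) = beta_{m+k+1}; for j <= m+k,
     pi(a_j) is the old pi(a_j) on H_{m+k} (last coordinate 0), and on
     H_{m+k}^* it is beta_{m+k+1} o phi_{k,m+k} o pi(a_j) o phi_{k,m+k} o beta_{m+k+1}. *)
Fixpoint pi_act (m k j : nat) (v : seq bool) : seq bool :=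
  match k with
  | 0 => flip j v
  | k'.+1 =>
      if j == m + k' + 2 then flip j v
      else
        let w := take (m + k' + 1) v in
        if nth false v (m + k' + 1)
        then rcons (swapc k'.+1 (m + k'.+1)
                      (pi_act m k' j (swapc k'.+1 (m + k'.+1) w))) true
        else rcons (pi_act m k' j w) false
  end.

(* The G_{m,k}-orbit of u is then {v | connect (gen_step m k) u v}. *)
Definition gen_step (m k : nat) : rel ((m + k + 1).-tuple bool) :=
  fun u v => [exists j : 'I_(m + k + 1),
                (val v == pi_act m k j.+1 (val u)) || (val u == pi_act m k j.+1 (val v))].
Arguments gen_step : clear implicits.

(* Main.v *)
Require Import Defs.
From mathcomp Require Import all_boot.
From mathcomp Require Import zify.
Set Implicit Arguments. Unset Strict Implicit.

Definition tau (a b t : nat) := if t == a.-1 then b.-1 else if t == b.-1 then a.-1 else t.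
Definition sig a b c := (tau a b c.-1).+1.

Lemma tauK a b t : tau a b (tau a b t) = t.
Proof.
rewrite /tau; set x := a.-1; set y := b.-1.
case: (t =P x) => [->|hx]; first by rewrite eqxx; case: (y =P x) => // ->.
case: (t =P y) => [->|hy]; first by rewrite eqxx.
by move/eqP/negbTE: hx => ->; move/eqP/negbTE: hy => ->.
Qed.

Lemma tau_lt a b t n : 0 < a <= n -> 0 < b <= n -> t < n -> tau a b t < n.
Proof. rewrite /tau => ha hb ht; case: eqP => _; first lia. case: eqP => _; lia. Qed.

Lemma size_flip i v : size (flip i v) = size v.
Proof. by rewrite /flip size_mkseq. Qed.

Lemma size_swapc i j v : size (swapc i j v) = size v.
Proof. by rewrite /swapc size_mkseq. Qed.

Lemma nth_flip i v t : t < size v ->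
  nth false (flip i v) t = if t == i.-1 then ~~ nth false v t else nth false v t.
Proof. by move=> ht; rewrite /flip nth_mkseq. Qed.

Lemma nth_swapc a b v t : t < size v ->
  nth false (swapc a b v) t = nth false v (tau a b t).
Proof. by move=> ht; rewrite /swapc nth_mkseq. Qed.

Lemma flipK i v : flip i (flip i v) = v.
Proof.
apply: (@eq_from_nth _ false); rewrite ?size_flip // => t ht.
rewrite nth_flip ?size_flip // nth_flip //. case: (t == i.-1) => /=; by rewrite ?negbK.
Qed.

Lemma swapcK a b v : 0 < a <= size v -> 0 < b <= size v ->
  swapc a b (swapc a b v) = v.
Proof.
move=> ha hb; apply: (@eq_from_nth _ false); rewrite ?size_swapc // => t ht.
by rewrite !nth_swapc ?size_swapc ?tauK // tau_lt.
Qed.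

Lemma flip_rcons c w b : 0 < c <= size w -> flip c (rcons w b) = rcons (flip c w) b.
Proof.
move=> hc; apply: (@eq_from_nth _ false); rewrite ?size_flip ?size_rcons ?size_flip // => t ht.
rewrite nth_flip ?size_rcons // !nth_rcons size_flip.
case: ltngtP => h.
- by rewrite nth_flip.
- lia.
- subst t; case: eqP => //; lia.
Qed.

Lemma flip_last w b : flip (size w).+1 (rcons w b) = rcons w (~~ b).
Proof.
apply: (@eq_from_nth _ false); rewrite ?size_flip ?size_rcons // => t ht.
rewrite nth_flip ?size_rcons // !nth_rcons.
by case: ltngtP.
Qed.

Lemma swap_flip_swap a b c w : 0 < a <= size w -> 0 < b <= size w -> 0 < c <= size w ->
  swapc a b (flip c (swapc a b w)) = flip (sig a b c) w.
Proof.
move=> ha hb hc; apply: (@eq_from_nth _ false); rewrite ?size_swapc ?size_flip ?size_swapc // => t ht.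
have htt : tau a b t < size w by apply: tau_lt.
rewrite nth_swapc ?size_flip ?size_swapc // nth_flip ?size_swapc //.
rewrite nth_flip // nth_swapc // tauK /sig /=.
have -> : (tau a b t == c.-1) = (t == tau a b c.-1).
  apply/eqP/eqP => [<-|->]; by rewrite tauK.
done.
Qed.

Lemma sig_range a b c n : 0 < a <= n -> 0 < b <= n -> 0 < c <= n -> 0 < sig a b c <= n.
Proof. move=> ha hb hc; rewrite /sig /=; have := @tau_lt a b c.-1 n ha hb; lia. Qed.

Lemma sigK a b c : 0 < c -> sig a b (sig a b c) = c.
Proof. by move=> hc; rewrite /sig /= tauK prednK. Qed.

Lemma flip_inj c c' v : 0 < c <= size v -> 0 < c' <= size v -> flip c v = flip c' v -> c = c'.
Proof.
move=> hc hc' e.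
have := congr1 (fun s => nth false s c.-1) e => /=.
rewrite !nth_flip; try lia. rewrite eqxx. case: eqP => [h|_]; first lia.
by case: (nth false v c.-1).
Qed.

Lemma pi_step m k j w b : size w = m + k + 1 ->
  pi_act m k.+1 j (rcons w b) = if j == m + k + 2 then flip j (rcons w b)
   else if b then rcons (swapc k.+1 (m+k+1) (pi_act m k j (swapc k.+1 (m+k+1) w))) true
   else rcons (pi_act m k j w) false.
Proof.
move=> hw /=. have -> : m + k.+1 = m + k + 1 by rewrite addnS addn1.
by rewrite -hw -cats1 take_size_cat // cats1 nth_rcons ltnn eqxx.
Qed.

Lemma piA m k : forall v, size v = m + k + 1 -> forall j, 0 < j <= m + k + 1 ->
  exists2 c, 0 < c <= m + k + 1 & pi_act m k j v = flip c v.
Proof.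
elim: k => [|k IH] v hv j hj; first by exists j.
case/lastP: v hv => [|w b] hv; first by move: hv; rewrite /= addn1.
rewrite size_rcons in hv; have hw : size w = m + k + 1 by lia.
rewrite pi_step //.
case: eqP => hj2; first by exists j.
have hj' : 0 < j <= m + k + 1 by lia.
case: b.
- have hs : size (swapc k.+1 (m + k + 1) w) = m + k + 1 by rewrite size_swapc.
  have [c hc ->] := IH _ hs j hj'.
  exists (sig k.+1 (m + k + 1) c); first by have := @sig_range k.+1 (m+k+1) c (m+k+1); lia.
  rewrite swap_flip_swap ?hw; try lia.
  rewrite flip_rcons // hw; have := @sig_range k.+1 (m+k+1) c (m+k+1); lia.
- have [c hc ->] := IH _ hw j hj'.
  exists c; first lia.
  by rewrite flip_rcons // hw.
Qed.

Lemma size_pi m k v j : size v = m + k + 1 -> 0 < j <= m + k + 1 ->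
  size (pi_act m k j v) = size v.
Proof. move=> hv hj; have [c _ ->] := piA hv hj; exact: size_flip. Qed.

Lemma piB m k : forall v, size v = m + k + 1 -> forall j, 0 < j <= m + k + 1 ->
  pi_act m k j (pi_act m k j v) = v.
Proof.
elim: k => [|k IH] v hv j hj; first exact: flipK.
case/lastP: v hv => [|w b] hv; first by move: hv; rewrite /= addn1.
rewrite size_rcons in hv; have hw : size w = m + k + 1 by lia.
rewrite (pi_step j b hw).
case: eqP => hj2.
  by rewrite /= hj2 eqxx flipK.
have hj' : 0 < j <= m + k + 1 by lia.
case: b.
- have hs : size (swapc k.+1 (m + k + 1) w) = m + k + 1 by rewrite size_swapc.
  have hp := size_pi hs hj'.
  rewrite pi_step; last by rewrite size_swapc hp.
  rewrite (introF eqP hj2) swapcK ?hp ?hs; try lia.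
  by rewrite IH // swapcK // hw; lia.
- rewrite pi_step; last by rewrite size_pi.
  by rewrite (introF eqP hj2) IH.
Qed.

Lemma piD m k : forall v, size v = m + k + 1 -> forall c, 0 < c <= m + k + 1 ->
  exists2 j, 0 < j <= m + k + 1 & pi_act m k j v = flip c v.
Proof.
elim: k => [|k IH] v hv c hc; first by exists c.
case/lastP: v hv => [|w b] hv; first by move: hv; rewrite /= addn1.
rewrite size_rcons in hv; have hw : size w = m + k + 1 by lia.
case: (c =P m + k + 2) => hc2.
  exists c; first lia. by rewrite pi_step // hc2 eqxx.
have hc' : 0 < c <= m + k + 1 by lia.
case: b.
- have hs : size (swapc k.+1 (m + k + 1) w) = m + k + 1 by rewrite size_swapc.
  have hsr := @sig_range k.+1 (m+k+1) c (m+k+1).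
  have [j hj e] := IH _ hs (sig k.+1 (m + k + 1) c) ltac:(lia).
  exists j; first lia.
  rewrite pi_step // ifN; last by apply/eqP; lia.
  rewrite e swap_flip_swap ?hw; try lia.
  by rewrite sigK ?flip_rcons // ?hw; lia.
- have [j hj e] := IH _ hw c hc'.
  exists j; first lia.
  rewrite pi_step // ifN; last by apply/eqP; lia.
  by rewrite e flip_rcons // hw.
Qed.

Lemma piC m k : forall v, size v = m + k + 1 -> forall j j', 0 < j <= m + k + 1 ->
  0 < j' <= m + k + 1 -> pi_act m k j v = pi_act m k j' v -> j = j'.
Proof.
elim: k => [|k IH] v hv j j' hj hj' e.
  by apply: (@flip_inj j j' v _ _ e); rewrite hv.
case/lastP: v hv e => [|w b] hv e; first by move: hv; rewrite /= addn1.
rewrite size_rcons in hv; have hw : size w = m + k + 1 by lia.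
wlog: j j' hj hj' e / j <= j'.
  move=> H; case: (leqP j j') => h; first exact: H.
  by symmetry; apply: H => //; lia.
move=> hle.
case: (j' =P m + k + 2) => hj2.
  case: (j =P m + k + 2) => hj1; first lia.
  move: e; rewrite !pi_step // hj2 eqxx ifN; last by apply/eqP.
  have -> : m + k + 2 = (size w).+1 by rewrite hw; lia.
  rewrite flip_last.
  by case: b => /rcons_inj [].
have hjj : 0 < j <= m + k + 1 by lia.
have hjj' : 0 < j' <= m + k + 1 by lia.
have hn : (j == m + k + 2) = false by apply/eqP; lia.
have hn' : (j' == m + k + 2) = false by apply/eqP; lia.
move: e; rewrite !pi_step // hn hn'.
case: b => e.
- have hs : size (swapc k.+1 (m + k + 1) w) = m + k + 1 by rewrite size_swapc.
  apply: (IH _ hs) => //.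
  move/rcons_inj: e => [] /(congr1 (swapc k.+1 (m + k + 1))).
  rewrite !swapcK ?size_pi // ?hs; lia.
- apply: (IH _ hw) => //.
  by move/rcons_inj: e => [].
Qed.

Definition mk (u v : seq bool) n i :=
  mkseq (fun t => if t < i then nth false v t else nth false u t) n.

Lemma step_flip m k (x y : (m + k + 1).-tuple bool) c : 0 < c <= m + k + 1 ->
  val y = flip c (val x) -> connect (gen_step m k) x y.
Proof.
move=> hc hy.
have [j hj e] := piD (size_tuple x) hc.
have hj1 : j.-1 < m + k + 1 by lia.
apply: connect1; apply/existsP; exists (Ordinal hj1).
rewrite /= prednK; last lia.
by apply/orP; left; rewrite e hy.
Qed.

Lemma transit m k (u v : (m + k + 1).-tuple bool) : connect (gen_step m k) u v.
Proof.
set n := m + k + 1.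
have hT : forall i, size (mk u v n i) == n by move=> i; rewrite size_mkseq.
pose T i : n.-tuple bool := Tuple (hT i).
have h0 : T 0 = u.
  apply: val_inj => /=; apply: (@eq_from_nth _ false); rewrite size_mkseq ?size_tuple // => t ht.
  by rewrite nth_mkseq.
have hn : T n = v.
  apply: val_inj => /=; apply: (@eq_from_nth _ false); rewrite size_mkseq ?size_tuple // => t ht.
  by rewrite nth_mkseq // ht.
suff : forall i, i <= n -> connect (gen_step m k) u (T i) by move/(_ n (leqnn n)); rewrite hn.
elim => [|i IH] hi; first by rewrite h0 connect0.
apply: (connect_trans (IH (ltnW hi))).
case: (boolP (nth false u i == nth false v i)) => hd.
  suff -> : T i.+1 = T i by apply: connect0.
  apply: val_inj => /=; apply: eq_mkseq => t.
  rewrite ltnS leq_eqVlt; case: eqP => [->|] //=.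
  by rewrite ltnn (eqP hd).
apply: (@step_flip m k _ _ i.+1); first lia.
apply: (@eq_from_nth _ false); rewrite /= ?size_flip /mk ?size_mkseq // => t ht.
rewrite nth_flip ?size_mkseq // !nth_mkseq //=.
rewrite ltnS leq_eqVlt; case: eqP => [->|] //=.
  by rewrite ltnn; case: (nth false u i) (nth false v i) hd => [] [].
Qed.

Theorem proposition6p1 (m : nat) (hm : 0 < m) :
  (* (1) G_{m,k} acts transitively on H_{m+k+1}, k = 0..m *)
  (forall k : nat, k <= m ->
     forall u v : (m + k + 1).-tuple bool, connect (gen_step m k) u v) /\
  (* (2) each pi(a_i) is an involution on H_{2m+1} *)
  (forall (i : 'I_(m + m + 1)) (v : (m + m + 1).-tuple bool),
     pi_act m m i.+1 (pi_act m m i.+1 (val v)) = val v) /\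
  (* (3) pi(a_i) v lies in H_{2m+1} and differs from v in exactly one coordinate *)
  (forall (i : 'I_(m + m + 1)) (v : (m + m + 1).-tuple bool),
     size (pi_act m m i.+1 (val v)) = m + m + 1 /\
     #|[set t : 'I_(m + m + 1) |
          nth false (pi_act m m i.+1 (val v)) t != nth false (val v) t]| = 1) /\
  (* (4) for i <> j, pi(a_i a_j) = pi(a_j) o pi(a_i) has no fixed point *)
  (forall (i j : 'I_(m + m + 1)) (v : (m + m + 1).-tuple bool),
     i != j -> pi_act m m j.+1 (pi_act m m i.+1 (val v)) != val v).
Proof.
split; first by move=> k _ u v; apply: transit.
split.
  move=> i v; apply: piB; first exact: size_tuple.
  by have := ltn_ord i; lia.
split.
  move=> i v.
  have hi : 0 < i.+1 <= m + m + 1 by have := ltn_ord i; lia.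
  have [c hc ->] := piA (size_tuple v) hi.
  split; first by rewrite size_flip size_tuple.
  have hc1 : c.-1 < m + m + 1 by lia.
  rewrite (_ : [set _ | _] = [set Ordinal hc1]) ?cards1 //.
  apply/setP => t; rewrite !inE nth_flip ?size_tuple //.
  case: (val t =P c.-1) => h.
    have -> : t == Ordinal hc1 by apply/eqP/val_inj.
    by case: (nth false _ _).
  rewrite eqxx /=; apply/esym/negbTE; apply/eqP => e; apply: h.
  by rewrite e.
move=> i j v hij; apply/eqP => e.
have hi : 0 < i.+1 <= m + m + 1 by have := ltn_ord i; lia.
have hj : 0 < j.+1 <= m + m + 1 by have := ltn_ord j; lia.
have hw : size (pi_act m m i.+1 (val v)) = m + m + 1.
  by rewrite size_pi // size_tuple.
have hb := piB (size_tuple v) hi.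
have := piC hw hj hi; rewrite e hb => /(_ erefl) [] /val_inj h.
by rewrite h eqxx in hij.
Qed.
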